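(* There is a constant $c>0$ such that for all integers $n\ge 2$ and $\tau\ge 1$ there exist a value $\varepsilon\ge 0$ and a set $\mathcal X$ of $n$ entities, each moving along a trajectory of $\tau$ edges (in general position), whose Reeb graph $\mathcal R$ has at least $c\,\tau n^2$ vertices and at least $c\,\tau n^2$ edges. In other words, the Reeb graph can have $\Omega(\tau n^2)$ vertices and $\Omega(\tau n^2)$ edges.
   Context: Let $\mathcal X$ be a set of $n$ entities. All trajectories are sampled at common times $t_0<t_1<\dots<t_\tau$; each entity $x$ has a position $x(t_i)\in\mathbb R^2$ at each $t_i$ and moves with constant velocity between consecutive sample times, so its trajectory is a polygonal path with $\tau$ edges defined on $[t_0,t_\tau]$. Fix $\varepsilon\ge 0$. Two entities $x,y$ are directly connected at time $t$ if their closed discs of radius $\varepsilon$ centred at $x(t)$ and $y(t)$ intersect, i.e. $\|x(t)-y(t)\|\le 2\varepsilon$. They are $\varepsilon$-connected at time $t$ if there is a sequence $x=x_0,\dots,x_k=y$ of entities with $x_i,x_{i+1}$ directly connected at $t$ for all $i$. A component at time $t$ is a maximal set of pairwise $\varepsilon$-connected entities; the components at time $t$ partition $\mathcal X$. General position: no two distinct events at which a pair of entities becomes directly connected or directly disconnected occur at the same time. The Reeb graph $\mathcal R$ is the directed graph describing the evolution of the components over $[t_0,t_\tau]$: it has a start vertex for each component at $t_0$ (in-degree 0, out-degree 1), an end vertex for each component at $t_\tau$ (in-degree 1, out-degree 0), a merge vertex (in-degree 2, out-degree 1) at each time two components unite into one, and a split vertex (in-degree 1, out-degree 2) at each time a component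 splits into two; each vertex $v$ has a time $t_v$, and each edge $e=(u,v)$ with $t_u<t_v$ corresponds to a set $C_e$ of entities that is a component at every time in $[t_u,t_v]$. *)

(* Defs.v *)
From Stdlib Require Import Reals Lra List Relations.
Open Scope R_scope.

(* Data of an instance:
   - n entities, indexed by 0..n-1;
   - tau edges, sample times T 0 < T 1 < ... < T tau;
   - P i k : position of entity i at time T k (k <= tau), in R^2 = R*R;
   - eps >= 0. *)

Definition lerp (ta tb : R) (pa pb : R * R) (t : R) : R * R :=
  let s := (t - ta) / (tb - ta) in
  (fst pa + s * (fst pb - fst pa), snd pa + s * (snd pb - snd pa)).

(* Polygonal trajectory through Q 0, ..., Q k at times T 0, ..., T k
   (meaningful for T 0 <= t <= T k). *)
Fixpoint traj (T : nat -> R) (Q : nat -> R * R) (k : nat) (t : R) : R * R :=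
  match k with
  | O => Q O
  | S k' => if Rle_dec t (T k') then traj T Q k' t
            else lerp (T k') (T k) (Q k') (Q k) t
  end.

Definition pos (tau : nat) (T : nat -> R) (P : nat -> nat -> R * R)
  (i : nat) (t : R) : R * R := traj T (P i) tau t.

Definition dist2 (a b : R * R) : R :=
  sqrt ((fst a - fst b) ^ 2 + (snd a - snd b) ^ 2).

(* closed eps-discs intersect *)
Definition dconn tau T P (eps t : R) (i j : nat) : Prop :=
  dist2 (pos tau T P i t) (pos tau T P j t) <= 2 * eps.

Definition econn (n : nat) tau T P (eps t : R) (i j : nat) : Prop :=
  clos_refl_trans nat
    (fun a b => (a < n)%nat /\ (b < n)%nat /\ dconn tau T P eps t a b) i j.

Definition valid_input (tau : nat) (T : nat -> R) (eps : R) : Prop :=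
  (forall k, (k < tau)%nat -> T k < T (S k)) /\ 0 <= eps.

Definition conn_event tau T P eps (i j : nat) (s : R) : Prop :=
  T O < s <= T tau /\ dconn tau T P eps s i j /\
  exists d, d > 0 /\ forall t, s - d < t < s -> ~ dconn tau T P eps t i j.

Definition disc_event tau T P eps (i j : nat) (s : R) : Prop :=
  T O <= s < T tau /\ dconn tau T P eps s i j /\
  exists d, d > 0 /\ forall t, s < t < s + d -> ~ dconn tau T P eps t i j.

Definition pair_event tau T P eps (b : bool) (i j : nat) (s : R) : Prop :=
  if b then conn_event tau T P eps i j s else disc_event tau T P eps i j s.

Definition general_position (n tau : nat) T P eps : Prop :=
  forall s i j k l b1 b2,
    (i < j)%nat -> (j < n)%nat -> (k < l)%nat -> (l < n)%nat ->
    pair_event tau T P eps b1 i j s -> pair_event tau T P eps b2 k l s ->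
    i = k /\ j = l /\ b1 = b2.

(* Times strictly inside (T 0, T tau) at which the component partition
   changes (merge or split vertices of the Reeb graph). *)
Definition critical_time n tau T P eps (s : R) : Prop :=
  T O < s < T tau /\
  forall d, d > 0 -> exists t, T O <= t <= T tau /\ Rabs (t - s) < d /\
    exists i j, (i < n)%nat /\ (j < n)%nat /\
      ~ (econn n tau T P eps t i j <-> econn n tau T P eps s i j).

Definition distinct_components n tau T P eps (t : R) (A : list nat) : Prop :=
  NoDup A /\ (forall i, In i A -> (i < n)%nat) /\
  forall i j, In i A -> In j A -> i <> j -> ~ econn n tau T P eps t i j.

(* The Reeb graph has at least `b` vertices: start vertices (components at
   T 0), end vertices (components at T tau), merge/split vertices. *)
Definition reeb_vertices_at_least n tau T P eps (b : R) : Prop :=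
  exists (A B : list nat) (S : list R),
    distinct_components n tau T P eps (T O) A /\
    distinct_components n tau T P eps (T tau) B /\
    NoDup S /\ (forall s, In s S -> critical_time n tau T P eps s) /\
    INR (length A + length B + length S) >= b.

(* A witness (i,t) denotes the edge whose component is that of i at time t,
   over the maximal time interval containing t on which that set is a
   component. *)
Definition same_edge n tau T P eps (w w' : nat * R) : Prop :=
  let (i, t) := w in let (i', t') := w' in
  (forall j, (j < n)%nat ->
     (econn n tau T P eps t i j <-> econn n tau T P eps t' i' j)) /\
  forall u, Rmin t t' <= u <= Rmax t t' ->
    forall j, (j < n)%nat ->
      (econn n tau T P eps u i j <-> econn n tau T P eps t i j).

Definition reeb_edges_at_least n tau T P eps (b : R) : Prop :=
  exists W : list (nat * R),
    (forall w, In w W -> (fst w < n)%nat /\ T O <= snd w <= T tau) /\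
    (forall p q, (p < q)%nat -> (q < length W)%nat ->
       ~ same_edge n tau T P eps (nth p W (O, 0)) (nth q W (O, 0))) /\
    INR (length W) >= b.

(* Main.v *)
Require Import Defs.
From Stdlib Require Import Reals Lra Lia List Relations.
Open Scope R_scope.

Lemma NoDup_prod {A B : Type} (l : list A) (l' : list B) :
  NoDup l -> NoDup l' -> NoDup (list_prod l l').
Proof.
  induction 1 as [|x l Hx Hl IH]; intros H'; simpl; [constructor|].
  apply NoDup_app.
  - apply NoDup_map_NoDup_ForallPairs; auto.
    intros u v _ _ E. inversion E; auto.
  - auto.
  - intros [y z] H1 H2. apply in_map_iff in H1. destruct H1 as [w [E _]].
    inversion E; subst. apply in_prod_iff in H2. tauto.
Qed.

Lemma traj_unfold Q k t : traj INR Q (S k) t =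
  if Rle_dec t (INR k) then traj INR Q k t
  else lerp (INR k) (INR (S k)) (Q k) (Q (S k)) t.
Proof. reflexivity. Qed.

Lemma traj_node Q k : traj INR Q k (INR k) = Q k.
Proof.
  destruct k. reflexivity.
  rewrite traj_unfold. rewrite S_INR.
  destruct (Rle_dec (INR k + 1) (INR k)). lra.
  unfold lerp. destruct (Q (S k)) as [x y]. simpl.
  replace ((INR k + 1 - INR k) / (INR k + 1 - INR k)) with 1 by (field; lra).
  f_equal; ring.
Qed.

Lemma traj_seg Q k j t : (j < k)%nat -> INR j <= t <= INR j + 1 ->
  traj INR Q k t = lerp (INR j) (INR j + 1) (Q j) (Q (S j)) t.
Proof.
  induction k; intros Hj Ht. lia.
  rewrite traj_unfold. destruct (Rle_dec t (INR k)).
  - destruct (Nat.eq_dec j k).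
    + subst. assert (t = INR k) by lra. subst.
      rewrite traj_node. unfold lerp. destruct (Q k) as [x y]. simpl.
      replace (INR k - INR k) with 0 by ring. unfold Rdiv. f_equal; ring.
    + apply IHk; auto; lia.
  - destruct (Nat.eq_dec j k).
    + subst. rewrite S_INR. reflexivity.
    + assert (INR (S j) <= INR k) by (apply le_INR; lia). rewrite S_INR in H. lra.
Qed.

Lemma edge_exists tau t : (1 <= tau)%nat -> 0 <= t <= INR tau ->
  exists j, (j < tau)%nat /\ INR j <= t <= INR j + 1.
Proof.
  intros Ht. destruct tau. lia. clear Ht. revert t.
  induction tau; intros t H.
  - exists O. simpl in *. split. lia. lra.
  - rewrite S_INR in H. destruct (Rle_dec t (INR (S tau))).
    + destruct (IHtau t) as [j [Hj Hj']]. lra. exists j. split. lia. auto.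
    + exists (S tau). split. lia. lra.
Qed.

Definition par (k : nat) : R := if Nat.even k then 0 else 1.
Lemma par_S k : par (S k) = 1 - par k.
Proof. unfold par. rewrite Nat.even_succ, <- Nat.negb_even.
  destruct (Nat.even k); simpl; ring. Qed.
Lemma par_cases k : par k = 0 \/ par k = 1.
Proof. unfold par. destruct (Nat.even k); auto. Qed.

Definition aN (n : nat) : nat := (n / 2)%nat.
Definition Dn (n : nat) : R := INR ((n - aN n + 2) * aN n).
Definition cm (n i : nat) : R := INR ((i - aN n + 1) * aN n).
Definition PP (n : nat) (i k : nat) : R * R :=
  if (i <? aN n)%nat then (INR i, 0) else (Dn n * par k - cm n i, 0).
Definition F (n j : nat) (t : R) : R := Dn n * (par j + (t - INR j) * (1 - 2 * par j)).
Definition Xe (n j : nat) (t : R) (i : nat) : R :=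
  if (i <? aN n)%nat then INR i else F n j t - cm n i.

Lemma pos_edge n tau j t i : (j < tau)%nat -> INR j <= t <= INR j + 1 ->
  Defs.pos tau INR (PP n) i t = (Xe n j t i, 0).
Proof.
  intros Hj Ht. unfold Defs.pos. rewrite (traj_seg _ _ j); auto.
  unfold lerp, PP, Xe, F. rewrite par_S.
  destruct (i <? aN n)%nat; simpl; f_equal; try field; try ring; lra.
Qed.

Lemma dconn_edge n tau j t i k : (j < tau)%nat -> INR j <= t <= INR j + 1 ->
  (dconn tau INR (PP n) (1/8) t i k <-> Rabs (Xe n j t i - Xe n j t k) <= 1/4).
Proof.
  intros Hj Ht. unfold dconn. rewrite !(pos_edge n tau j); auto.
  unfold dist2. simpl fst; simpl snd.
  replace ((Xe n j t i - Xe n j t k) ^ 2 + (0 - 0) ^ 2) with (Rsqr (Xe n j t i - Xe n j t k))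
    by (unfold Rsqr; ring).
  rewrite sqrt_Rsqr_abs. split; intro; lra.
Qed.

Ltac rabs := unfold Rabs in *; repeat match goal with
  | |- context [Rcase_abs ?x] => destruct (Rcase_abs x)
  | H : context [Rcase_abs ?x] |- _ => destruct (Rcase_abs x)
  end; lra.

Lemma aN_facts n : (2 <= n)%nat -> (1 <= aN n /\ aN n < n)%nat.
Proof. intros. unfold aN. pose proof (Nat.div_mod_eq n 2).
  pose proof (Nat.mod_upper_bound n 2 ltac:(lia)). lia. Qed.

Lemma INR_dist1 m m' : m <> m' -> 1 <= Rabs (INR m - INR m').
Proof. intros H. destruct (Nat.lt_gt_cases m m') as [[H1|H1] _]; auto.
  - assert (INR (S m) <= INR m') by (apply le_INR; lia). rewrite S_INR in H0. rabs.
  - assert (INR (S m') <= INR m) by (apply le_INR; lia). rewrite S_INR in H0. rabs.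
Qed.

Lemma sametype n j t u v : (1 <= aN n)%nat -> u <> v -> (u <? aN n)%nat = (v <? aN n)%nat ->
  1 <= Rabs (Xe n j t u - Xe n j t v).
Proof.
  intros Ha Huv E. unfold Xe. rewrite E. destruct (v <? aN n)%nat eqn:Ev.
  - apply INR_dist1; auto.
  - assert (Eu : (u <? aN n)%nat = false) by congruence.
    apply Nat.ltb_ge in Ev. apply Nat.ltb_ge in Eu. unfold cm.
    replace (F n j t - INR ((u - aN n + 1) * aN n) - (F n j t - INR ((v - aN n + 1) * aN n)))
      with (INR ((v - aN n + 1) * aN n) - INR ((u - aN n + 1) * aN n)) by ring.
    apply INR_dist1. intro H. apply Nat.mul_cancel_r in H; lia.
Qed.

Lemma tri p q r : Rabs (p - q) <= 1/4 -> Rabs (q - r) <= 1/4 -> Rabs (p - r) <= 1/2.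
Proof. intros. rabs. Qed.

Lemma econn_char n tau t x y : (2 <= n)%nat -> (1 <= tau)%nat -> 0 <= t <= INR tau ->
  econn n tau INR (PP n) (1/8) t x y ->
  x = y \/ ((x < n)%nat /\ (y < n)%nat /\ dconn tau INR (PP n) (1/8) t x y).
Proof.
  intros Hn Ht Htt H. destruct (aN_facts n Hn) as [Ha1 Ha2].
  destruct (edge_exists tau t Ht Htt) as [j [Hj Hjt]].
  induction H as [x y Hs | x | x y z _ IH1 _ IH2].
  - right. exact Hs.
  - left. reflexivity.
  - destruct IH1 as [<-|[Hx [Hy D1]]]; auto.
    destruct IH2 as [<-|[Hy' [Hz D2]]]; [right; auto|].
    destruct (Nat.eq_dec x y) as [<-|Nxy]; [right; auto|].
    destruct (Nat.eq_dec y z) as [<-|Nyz]; [right; auto|].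
    destruct (Nat.eq_dec x z) as [<-|Nxz]; [left; auto|].
    exfalso.
    rewrite (dconn_edge n tau j) in D1, D2; auto.
    pose proof (tri _ _ _ D1 D2).
    destruct (x <? aN n)%nat eqn:Ex, (y <? aN n)%nat eqn:Ey, (z <? aN n)%nat eqn:Ez;
    first [ pose proof (sametype n j t x y Ha1 Nxy ltac:(congruence)); lra
          | pose proof (sametype n j t y z Ha1 Nyz ltac:(congruence)); lra
          | pose proof (sametype n j t x z Ha1 Nxz ltac:(congruence)); lra ].
Qed.

Lemma vinj p p' x x' a : (p < a -> p' < a -> p + x*a = p' + x'*a -> p = p' /\ x = x')%nat.
Proof. intros. destruct (Nat.lt_trichotomy x x') as [H2|[H2|H2]].
- assert (S x * a <= x' * a)%nat by (apply Nat.mul_le_mono_r; lia). simpl in *; lia.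
- subst; lia.
- assert (S x' * a <= x * a)%nat by (apply Nat.mul_le_mono_r; lia). simpl in *; lia. Qed.

Lemma keyR w m e0 : 0 < e0 -> Rabs w <= 1/4 -> 0 < m ->
  (forall e, 0 < e < e0 -> 1/4 < Rabs (w + m * e)) -> w = 1/4.
Proof.
  intros He0 Hw Hm H. destruct (Req_dec w (1/4)) as [|Hne]; auto. exfalso.
  assert (Hw' : -1/4 <= w < 1/4) by rabs.
  set (e := Rmin e0 ((1/4 - w)/m) / 2).
  assert (P1 : 0 < (1/4 - w)/m) by (apply Rdiv_lt_0_compat; lra).
  assert (P2 : 0 < Rmin e0 ((1/4 - w)/m)) by (apply Rmin_glb_lt; lra).
  pose proof (Rmin_l e0 ((1/4 - w)/m)). pose proof (Rmin_r e0 ((1/4 - w)/m)).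
  assert (0 < e < e0) by (unfold e; lra).
  specialize (H e H2).
  assert (m * e <= m * (((1/4 - w)/m) / 2)).
  { apply Rmult_le_compat_l. lra. unfold e. lra. }
  replace (m * (((1/4 - w)/m) / 2)) with ((1/4 - w)/2) in H3 by (field; lra).
  assert (0 < m * e) by (apply Rmult_lt_0_compat; lra).
  rabs.
Qed.

Lemma keyRn w m e0 : 0 < e0 -> Rabs w <= 1/4 -> m < 0 ->
  (forall e, 0 < e < e0 -> 1/4 < Rabs (w + m * e)) -> w = -1/4.
Proof.
  intros He0 Hw Hm H.
  assert (-w = 1/4). { apply (keyR (-w) (-m) e0); auto. rewrite Rabs_Ropp; auto. lra.
    intros e He. specialize (H e He).
    replace (-w + -m*e) with (-(w + m*e)) by ring. rewrite Rabs_Ropp. auto. }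
  lra.
Qed.

Lemma Vbounds n i j : (2 <= n)%nat -> (i < aN n)%nat -> (aN n <= j < n)%nat ->
  1 <= INR i + cm n j /\ INR i + cm n j + 2 <= Dn n.
Proof.
  intros Hn Hi Hj. destruct (aN_facts n Hn). unfold cm, Dn.
  rewrite <- plus_INR. split.
  - replace 1 with (INR 1) by reflexivity. apply le_INR. nia.
  - replace 2 with (INR 2) by reflexivity. rewrite <- plus_INR. apply le_INR.
    assert ((j - aN n + 1) * aN n <= (n - aN n) * aN n)%nat by (apply Nat.mul_le_mono_r; lia).
    nia.
Qed.

Lemma Xe_diff n j0 t i j : (i < aN n)%nat -> (aN n <= j)%nat ->
  Xe n j0 t i - Xe n j0 t j = (INR i + cm n j) - F n j0 t.
Proof.
  intros Hi Hj. unfold Xe. apply Nat.ltb_lt in Hi. rewrite Hi.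
  apply Nat.ltb_ge in Hj. rewrite Hj. ring.
Qed.

Lemma ev n tau b i j s j0 : (2 <= n)%nat -> (i < aN n)%nat -> (aN n <= j < n)%nat ->
  (j0 < tau)%nat -> INR j0 <= s <= INR j0 + 1 ->
  pair_event tau INR (PP n) (1/8) b i j s ->
  F n j0 s - (INR i + cm n j) = (if b then -1 else 1) * (1 - 2 * par j0) / 4.
Proof.
  intros Hn Hi Hj Hj0 Hs E.
  pose proof (Vbounds n i j Hn Hi Hj) as [V1 V2].
  set (V := INR i + cm n j) in *.
  assert (Hd : dconn tau INR (PP n) (1/8) s i j) by (destruct b; apply E).
  rewrite (dconn_edge n tau j0) in Hd; auto.
  rewrite Xe_diff in Hd by lia. fold V in Hd. rewrite Rabs_minus_sym in Hd.
  assert (Fl : forall t, F n j0 t - V = (F n j0 s - V) + (t - s) * (Dn n * (1 - 2 * par j0)))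
    by (intros; unfold F; ring).
  assert (Hs' : INR j0 < s < INR j0 + 1).
  { split; apply Rnot_le_lt; intro C.
    - assert (s = INR j0) by lra. subst s. unfold F in Hd.
      destruct (par_cases j0) as [P|P]; rewrite P in Hd;
        replace (INR j0 - INR j0) with 0 in Hd by ring; rabs.
    - assert (s = INR j0 + 1) by lra. subst s. unfold F in Hd.
      destruct (par_cases j0) as [P|P]; rewrite P in Hd;
        replace (INR j0 + 1 - INR j0) with 1 in Hd by ring; rabs. }
  set (w := F n j0 s - V) in *.
  destruct b; simpl in E.
  - destruct E as [_ [_ [d [Hdp Hw]]]].
    assert (H' : forall e, 0 < e < Rmin d (s - INR j0) ->
      1/4 < Rabs (w + (- (Dn n * (1 - 2 * par j0))) * e)).
    { intros e He. pose proof (Rmin_l d (s - INR j0)). pose proof (Rmin_r d (s - INR j0)).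
      specialize (Hw (s - e) ltac:(lra)).
      rewrite (dconn_edge n tau j0) in Hw by (auto; lra).
      rewrite Xe_diff in Hw by lia. fold V in Hw. rewrite Rabs_minus_sym in Hw.
      rewrite Fl in Hw. fold w in Hw.
      replace (w + - (Dn n * (1 - 2 * par j0)) * e) with (w + (s - e - s) * (Dn n * (1 - 2 * par j0))) by ring.
      lra. }
    assert (0 < Rmin d (s - INR j0)) by (apply Rmin_glb_lt; lra).
    destruct (par_cases j0) as [P|P].
    + assert (w = -1/4). { apply (keyRn w (- (Dn n * (1 - 2 * par j0))) _ H Hd); auto. rewrite P; lra. }
      rewrite P; lra.
    + assert (w = 1/4). { apply (keyR w (- (Dn n * (1 - 2 * par j0))) _ H Hd); auto. rewrite P; lra. }
      rewrite P; lra.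
  - destruct E as [_ [_ [d [Hdp Hw]]]].
    assert (H' : forall e, 0 < e < Rmin d (INR j0 + 1 - s) ->
      1/4 < Rabs (w + (Dn n * (1 - 2 * par j0)) * e)).
    { intros e He. pose proof (Rmin_l d (INR j0 + 1 - s)). pose proof (Rmin_r d (INR j0 + 1 - s)).
      specialize (Hw (s + e) ltac:(lra)).
      rewrite (dconn_edge n tau j0) in Hw by (auto; lra).
      rewrite Xe_diff in Hw by lia. fold V in Hw. rewrite Rabs_minus_sym in Hw.
      rewrite Fl in Hw. fold w in Hw.
      replace (w + (Dn n * (1 - 2 * par j0)) * e) with (w + (s + e - s) * (Dn n * (1 - 2 * par j0))) by ring.
      lra. }
    assert (0 < Rmin d (INR j0 + 1 - s)) by (apply Rmin_glb_lt; lra).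
    destruct (par_cases j0) as [P|P].
    + assert (w = 1/4). { apply (keyR w ((Dn n * (1 - 2 * par j0))) _ H Hd); auto. rewrite P; lra. }
      rewrite P; lra.
    + assert (w = -1/4). { apply (keyRn w ((Dn n * (1 - 2 * par j0))) _ H Hd); auto. rewrite P; lra. }
      rewrite P; lra.
Qed.

Lemma types n tau j0 s i j : (2 <= n)%nat -> (j0 < tau)%nat -> INR j0 <= s <= INR j0 + 1 ->
  (i < j)%nat -> dconn tau INR (PP n) (1/8) s i j -> (i < aN n)%nat /\ (aN n <= j)%nat.
Proof.
  intros Hn Hj0 Hs Hij Hd. destruct (aN_facts n Hn).
  rewrite (dconn_edge n tau j0) in Hd; auto.
  destruct (i <? aN n)%nat eqn:Ei, (j <? aN n)%nat eqn:Ej.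
  - pose proof (sametype n j0 s i j ltac:(lia) ltac:(lia) ltac:(congruence)). lra.
  - apply Nat.ltb_lt in Ei; apply Nat.ltb_ge in Ej; lia.
  - apply Nat.ltb_ge in Ei; apply Nat.ltb_lt in Ej; lia.
  - pose proof (sametype n j0 s i j ltac:(lia) ltac:(lia) ltac:(congruence)). lra.
Qed.

Lemma gp n tau : (2 <= n)%nat -> (1 <= tau)%nat -> general_position n tau INR (PP n) (1/8).
Proof.
  intros Hn Ht s i j k l b1 b2 Hij Hjn Hkl Hln E1 E2.
  assert (Hs : 0 <= s <= INR tau) by (destruct b1; simpl in E1; destruct E1 as [H _]; simpl in H; lra).
  destruct (edge_exists tau s Ht Hs) as [j0 [Hj0 Hsj]].
  assert (D1 : dconn tau INR (PP n) (1/8) s i j) by (destruct b1; apply E1).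
  assert (D2 : dconn tau INR (PP n) (1/8) s k l) by (destruct b2; apply E2).
  destruct (types n tau j0 s i j Hn Hj0 Hsj Hij D1).
  destruct (types n tau j0 s k l Hn Hj0 Hsj Hkl D2).
  pose proof (ev n tau b1 i j s j0 Hn H ltac:(lia) Hj0 Hsj E1) as Q1.
  pose proof (ev n tau b2 k l s j0 Hn H1 ltac:(lia) Hj0 Hsj E2) as Q2.
  unfold cm in Q1, Q2. rewrite <- plus_INR in Q1, Q2.
  destruct (Nat.eq_dec (i + (j - aN n + 1) * aN n) (k + (l - aN n + 1) * aN n)) as [E|E].
  - destruct (vinj _ _ _ _ _ H H1 E).
    assert (b1 = b2).
    { rewrite E in Q1. destruct b1, b2; auto; destruct (par_cases j0) as [P|P]; rewrite P in *; lra. }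
    repeat split; auto; lia.
  - exfalso. pose proof (INR_dist1 _ _ E).
    destruct b1, b2; destruct (par_cases j0) as [P|P]; rewrite P in *; rabs.
Qed.

Definition time (j : nat) (u : R) : R := INR j + par j + (1 - 2 * par j) * u.
Definition LL n tau := list_prod (list_prod (seq 0 tau) (seq 0 (aN n))) (seq 0 (n - aN n)).
Definition VV n p q : R := INR (p + (q + 1) * aN n).
Definition crit n (x : (nat * nat) * nat) : R :=
  let '((j, p), q) := x in time j ((VV n p q - 1/4) / Dn n).
Definition wit n (x : (nat * nat) * nat) : nat * R :=
  let '((j, p), q) := x in ((aN n + q)%nat, time j (VV n p q / Dn n)).

Lemma inLL n tau j p q : In ((j, p), q) (LL n tau) <->
  (j < tau)%nat /\ (p < aN n)%nat /\ (q < n - aN n)%nat.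
Proof. unfold LL. rewrite !in_prod_iff, !in_seq. lia. Qed.

Lemma time_in j u : 0 <= u <= 1 -> INR j <= time j u <= INR j + 1.
Proof. intros. unfold time. destruct (par_cases j) as [P|P]; rewrite P; lra. Qed.
Lemma time_in' j u : 0 < u < 1 -> INR j < time j u < INR j + 1.
Proof. intros. unfold time. destruct (par_cases j) as [P|P]; rewrite P; lra. Qed.
Lemma F_time n j u : F n j (time j u) = Dn n * u.
Proof. unfold F, time. destruct (par_cases j) as [P|P]; rewrite P; ring. Qed.

Lemma Xdiff2 n j t p q : (p < aN n)%nat ->
  Xe n j t p - Xe n j t (aN n + q) = VV n p q - F n j t.
Proof.
  intros Hp. rewrite Xe_diff by lia. unfold cm, VV. rewrite plus_INR.
  replace (aN n + q - aN n + 1)%nat with (q + 1)%nat by lia. ring.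
Qed.

Lemma Vb2 n p q : (2 <= n)%nat -> (p < aN n)%nat -> (q < n - aN n)%nat ->
  1 <= VV n p q /\ VV n p q + 2 <= Dn n.
Proof.
  intros. pose proof (Vbounds n p (aN n + q) H H0 ltac:(lia)).
  unfold cm in H2. unfold VV. rewrite plus_INR.
  replace (aN n + q - aN n + 1)%nat with (q + 1)%nat in H2 by lia. exact H2.
Qed.

Lemma crit_ok n tau x : (2 <= n)%nat -> (1 <= tau)%nat -> In x (LL n tau) ->
  critical_time n tau INR (PP n) (1/8) (crit n x).
Proof.
  intros Hn Ht Hx. destruct x as [[j p] q]. apply inLL in Hx. destruct Hx as [Hj [Hp Hq]].
  destruct (Vb2 n p q Hn Hp Hq) as [V1 V2].
  set (V := VV n p q) in *.
  set (u0 := (V - 1/4) / Dn n).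
  assert (HD : Dn n * u0 = V - 1/4) by (unfold u0; field; lra).
  assert (Hu0 : 0 < u0 < 1).
  { split. unfold u0; apply Rdiv_lt_0_compat; lra.
    apply (Rmult_lt_reg_l (Dn n)). lra. rewrite HD. lra. }
  assert (Htau : INR j + 1 <= INR tau) by (rewrite <- S_INR; apply le_INR; lia).
  pose proof (pos_INR j).
  simpl crit. unfold critical_time. change (time j ((VV n p q - 1 / 4) / Dn n)) with (time j u0). change (INR 0) with 0.
  pose proof (time_in' j u0 Hu0).
  split. lra.
  intros d Hd.
  set (e := Rmin d u0 / 2).
  assert (0 < Rmin d u0) by (apply Rmin_glb_lt; lra).
  pose proof (Rmin_l d u0). pose proof (Rmin_r d u0).
  assert (He : 0 < e /\ e < d /\ e < u0) by (unfold e; lra).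
  exists (time j (u0 - e)).
  pose proof (time_in j (u0 - e) ltac:(lra)).
  split. lra. split.
  { unfold time. destruct (par_cases j) as [P|P]; rewrite P; rabs. }
  exists p, (aN n + q)%nat. split. lia. split. lia.
  intro Hiff.
  assert (Es : econn n tau INR (PP n) (1/8) (time j u0) p (aN n + q)).
  { apply rt_step. split. lia. split. lia.
    rewrite (dconn_edge n tau j) by (auto; lra).
    rewrite Xdiff2, F_time by auto. fold V. rewrite HD. rabs. }
  apply Hiff in Es.
  apply econn_char in Es; auto; try lra.
  destruct Es as [E|[_ [_ Es]]]. lia.
  rewrite (dconn_edge n tau j) in Es by (auto; lra).
  rewrite Xdiff2, F_time in Es by auto. fold V in Es.
  replace (Dn n * (u0 - e)) with (V - 1/4 - Dn n * e) in Es by (rewrite <- HD; ring).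
  assert (0 < Dn n * e) by (apply Rmult_lt_0_compat; lra).
  rabs.
Qed.

Lemma dmid n tau j p q u : (j < tau)%nat -> (p < aN n)%nat -> 0 <= u <= 1 ->
  (dconn tau INR (PP n) (1/8) (time j u) (aN n + q) p <-> Rabs (VV n p q - Dn n * u) <= 1/4).
Proof.
  intros. rewrite (dconn_edge n tau j) by (auto; apply time_in; auto).
  rewrite Rabs_minus_sym, Xdiff2, F_time by auto. tauto.
Qed.

Lemma node_nd n tau j p q : (2 <= n)%nat -> (j < tau)%nat -> (p < aN n)%nat -> (q < n - aN n)%nat ->
  ~ dconn tau INR (PP n) (1/8) (INR j + 1) (aN n + q) p.
Proof.
  intros Hn Hj Hp Hq D. destruct (Vb2 n p q Hn Hp Hq).
  rewrite (dconn_edge n tau j) in D by (auto; lra).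
  rewrite Rabs_minus_sym, Xdiff2 in D by auto. unfold F in D.
  replace (INR j + 1 - INR j) with 1 in D by ring.
  destruct (par_cases j) as [P|P]; rewrite P in D; rabs.
Qed.

Lemma wit_ok n tau x y : (2 <= n)%nat -> (1 <= tau)%nat -> In x (LL n tau) -> In y (LL n tau) ->
  x <> y -> ~ same_edge n tau INR (PP n) (1/8) (wit n x) (wit n y).
Proof.
  intros Hn Ht Hx Hy Nxy HS.
  destruct x as [[j p] q], y as [[j' p'] q'].
  apply inLL in Hx, Hy. destruct Hx as [Hj [Hp Hq]], Hy as [Hj' [Hp' Hq']].
  unfold same_edge, wit in HS. destruct HS as [H1 H2].
  destruct (Vb2 n p q Hn Hp Hq) as [V1 V2].
  destruct (Vb2 n p' q' Hn Hp' Hq') as [V1' V2'].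
  assert (Hu : 0 < VV n p q / Dn n < 1).
  { split. apply Rdiv_lt_0_compat; lra. apply (Rmult_lt_reg_l (Dn n)). lra.
    replace (Dn n * (VV n p q / Dn n)) with (VV n p q) by (field; lra). lra. }
  assert (Hu' : 0 < VV n p' q' / Dn n < 1).
  { split. apply Rdiv_lt_0_compat; lra. apply (Rmult_lt_reg_l (Dn n)). lra.
    replace (Dn n * (VV n p' q' / Dn n)) with (VV n p' q') by (field; lra). lra. }
  set (tm := time j (VV n p q / Dn n)) in *.
  set (tm' := time j' (VV n p' q' / Dn n)) in *.
  pose proof (time_in' j _ Hu) as Tm. pose proof (time_in' j' _ Hu') as Tm'.
  fold tm in Tm. fold tm' in Tm'.
  assert (Htau : INR j + 1 <= INR tau) by (rewrite <- S_INR; apply le_INR; lia).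
  assert (Htau' : INR j' + 1 <= INR tau) by (rewrite <- S_INR; apply le_INR; lia).
  pose proof (pos_INR j). pose proof (pos_INR j').
  destruct (aN_facts n Hn) as [Ha1 Ha2].
  assert (Em : econn n tau INR (PP n) (1/8) tm (aN n + q) p).
  { apply rt_step. split. lia. split. lia. unfold tm. rewrite dmid by (auto; lra).
    replace (Dn n * (VV n p q / Dn n)) with (VV n p q) by (field; lra). rabs. }
  assert (q = q').
  { destruct (H1 (aN n + q)%nat ltac:(lia)) as [E _].
    specialize (E (rt_refl _ _ _)).
    apply econn_char in E; auto; try lra.
    destruct E as [E|[_ [_ E]]]. lia.
    rewrite (dconn_edge n tau j') in E by (auto; lra).
    destruct (Nat.eq_dec q q'); auto.
    pose proof (sametype n j' tm' (aN n + q') (aN n + q) ltac:(lia) ltac:(lia)).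
    assert ((aN n + q' <? aN n)%nat = false) by (apply Nat.ltb_ge; lia).
    assert ((aN n + q <? aN n)%nat = false) by (apply Nat.ltb_ge; lia).
    specialize (H3 ltac:(congruence)). lra. }
  subst q'.
  assert (p = p').
  { destruct (H1 p ltac:(lia)) as [E _]. specialize (E Em).
    apply econn_char in E; auto; try lra.
    destruct E as [E|[_ [_ E]]]. lia.
    unfold tm' in E. rewrite dmid in E by (auto; lra).
    replace (Dn n * (VV n p' q / Dn n)) with (VV n p' q) in E by (field; lra).
    destruct (Nat.eq_dec p p'); auto. exfalso.
    unfold VV in E. pose proof (INR_dist1 (p + (q + 1) * aN n) (p' + (q + 1) * aN n) ltac:(lia)).
    lra. }
  subst p'.
  assert (j <> j') by (intro; subst; auto).
  pose proof (Rmin_l tm tm'). pose proof (Rmin_r tm tm').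
  pose proof (Rmax_l tm tm'). pose proof (Rmax_r tm tm').
  destruct (Nat.lt_gt_cases j j') as [[Hlt|Hlt] _]; auto.
  - assert (INR (S j) <= INR j') as Hs9 by (apply le_INR; lia). rewrite S_INR in Hs9.
    destruct (H2 (INR j + 1) ltac:(lra) p ltac:(lia)) as [_ E].
    specialize (E Em). apply econn_char in E; auto; try lra.
    destruct E as [E|[_ [_ E]]]. lia.
    apply (node_nd n tau j p q); auto.
  - assert (INR (S j') <= INR j) as Hs9 by (apply le_INR; lia). rewrite S_INR in Hs9.
    destruct (H2 (INR j' + 1) ltac:(lra) p ltac:(lia)) as [_ E].
    specialize (E Em). apply econn_char in E; auto; try lra.
    destruct E as [E|[_ [_ E]]]. lia.
    apply (node_nd n tau j' p q); auto.
Qed.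

Lemma LL_nodup n tau : NoDup (LL n tau).
Proof. unfold LL. repeat apply NoDup_prod; apply seq_NoDup. Qed.

Lemma LL_len n tau : length (LL n tau) = (tau * aN n * (n - aN n))%nat.
Proof. unfold LL. rewrite !length_prod, !length_seq. reflexivity. Qed.

Lemma crit_inj n tau x y : (2 <= n)%nat -> In x (LL n tau) -> In y (LL n tau) ->
  crit n x = crit n y -> x = y.
Proof.
  intros Hn Hx Hy E. destruct x as [[j p] q], y as [[j' p'] q'].
  apply inLL in Hx, Hy. destruct Hx as [Hj [Hp Hq]], Hy as [Hj' [Hp' Hq']].
  destruct (Vb2 n p q Hn Hp Hq) as [V1 V2].
  destruct (Vb2 n p' q' Hn Hp' Hq') as [V1' V2'].
  simpl in E.
  set (u := (VV n p q - 1/4) / Dn n) in *.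
  set (u' := (VV n p' q' - 1/4) / Dn n) in *.
  assert (HD : Dn n * u = VV n p q - 1/4) by (unfold u; field; lra).
  assert (HD' : Dn n * u' = VV n p' q' - 1/4) by (unfold u'; field; lra).
  assert (Hu : 0 < u < 1).
  { split. unfold u; apply Rdiv_lt_0_compat; lra. apply (Rmult_lt_reg_l (Dn n)). lra. rewrite HD. lra. }
  assert (Hu' : 0 < u' < 1).
  { split. unfold u'; apply Rdiv_lt_0_compat; lra. apply (Rmult_lt_reg_l (Dn n)). lra. rewrite HD'. lra. }
  pose proof (time_in' j u Hu). pose proof (time_in' j' u' Hu').
  assert (j = j').
  { destruct (Nat.eq_dec j j') as [|Hne]; auto. exfalso.
    destruct (Nat.lt_gt_cases j j') as [[Hlt|Hlt] _]; auto.
    + assert (INR (S j) <= INR j') by (apply le_INR; lia). rewrite S_INR in H1. lra.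
    + assert (INR (S j') <= INR j) by (apply le_INR; lia). rewrite S_INR in H1. lra. }
  subst j'.
  assert (Euu : u = u') by (unfold time in E; destruct (par_cases j) as [P|P]; rewrite P in E; lra).
  assert (H2 : VV n p q = VV n p' q') by (rewrite Euu in HD; lra).
  unfold VV in H2. apply INR_eq in H2.
  destruct (vinj _ _ _ _ _ Hp Hp' H2). subst. f_equal. f_equal. lia.
Qed.

Lemma count n tau : (2 <= n)%nat -> (1 <= tau)%nat ->
  INR (tau * aN n * (n - aN n)) >= 1/8 * INR tau * INR n ^ 2.
Proof.
  intros Hn Ht.
  assert (H : (n * n <= 8 * (aN n * (n - aN n)))%nat).
  { unfold aN. pose proof (Nat.div_mod_eq n 2). pose proof (Nat.mod_upper_bound n 2 ltac:(lia)). nia. }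
  assert (H' : (tau * (n * n) <= 8 * (tau * aN n * (n - aN n)))%nat) by nia.
  apply le_INR in H'. rewrite !mult_INR in H'.
  replace (INR 8) with 8 in H' by (simpl; ring).
  rewrite !mult_INR. simpl pow. nra.
Qed.

Theorem lemma1 :
  exists c : R, c > 0 /\
    forall n tau : nat, (2 <= n)%nat -> (1 <= tau)%nat ->
      exists (eps : R) (T : nat -> R) (P : nat -> nat -> R * R),
        valid_input tau T eps /\
        general_position n tau T P eps /\
        reeb_vertices_at_least n tau T P eps (c * INR tau * INR n ^ 2) /\
        reeb_edges_at_least n tau T P eps (c * INR tau * INR n ^ 2).
Proof.
  exists (1/8). split. lra.
  intros n tau Hn Ht. exists (1/8), INR, (PP n).
  pose proof (count n tau Hn Ht) as Hc.
  split; [|split; [|split]].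
  - split. intros k _. rewrite S_INR. lra. lra.
  - apply gp; auto.
  - exists nil, nil, (map (crit n) (LL n tau)).
    split; [|split; [|split; [|split]]].
    + split. constructor. split; [intros i Hi; destruct Hi|intros i j Hi; destruct Hi].
    + split. constructor. split; [intros i Hi; destruct Hi|intros i j Hi; destruct Hi].
    + apply NoDup_map_NoDup_ForallPairs; [|apply LL_nodup].
      intros x y Hx Hy E. apply (crit_inj n tau); auto.
    + intros s Hs. apply in_map_iff in Hs. destruct Hs as [x [<- Hx]].
      apply crit_ok; auto.
    + simpl. rewrite length_map, LL_len. exact Hc.
  - exists (map (wit n) (LL n tau)).
    assert (Hmem : forall x, In x (LL n tau) -> (fst (wit n x) < n)%nat /\ 0 <= snd (wit n x) <= INR tau).
    { intros [[j p] q] Hx. pose proof Hx as Hx'. apply inLL in Hx. destruct Hx as [Hj [Hp Hq]].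
      destruct (Vb2 n p q Hn Hp Hq) as [V1 V2].
      simpl. split. lia.
      assert (0 <= VV n p q / Dn n <= 1).
      { split. apply Rlt_le, Rdiv_lt_0_compat; lra.
        apply (Rmult_le_reg_l (Dn n)). lra.
        replace (Dn n * (VV n p q / Dn n)) with (VV n p q) by (field; lra). lra. }
      pose proof (time_in j _ H). pose proof (pos_INR j).
      assert (INR j + 1 <= INR tau) by (rewrite <- S_INR; apply le_INR; lia). lra. }
    split; [|split].
    + intros w Hw. apply in_map_iff in Hw. destruct Hw as [x [<- Hx]].
      destruct (Hmem x Hx). split; auto.
    + intros p q Hpq Hq. rewrite length_map in Hq.
      set (d0 := ((O, O), O)).
      rewrite (nth_indep _ _ (wit n d0)) by (rewrite length_map; lia).
      rewrite (nth_indep _ (O, 0) (wit n d0)) by (rewrite length_map; lia).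
      rewrite !map_nth.
      apply (wit_ok n tau); auto; try (apply nth_In; lia).
      intro E. pose proof (proj1 (NoDup_nth (LL n tau) d0) (LL_nodup n tau) p q ltac:(lia) ltac:(lia) E).
      lia.
    + rewrite length_map, LL_len. exact Hc.
Qed.
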